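(* Both the randomized and the deterministic query complexity of $TARSKI(2,k)$ are $\Theta(k)$; that is, there are constants $0<c_1\le c_2$ such that for every $k\in\mathbb{N}$, each of these complexities lies between $c_1 k$ and $c_2 k$.
   Context: $TARSKI(2,k)$: given oracle access to an unknown monotone function $f:\{0,1\}^k\to\{0,1\}^k$ (monotone with respect to the componentwise order: $a\le b$ iff $a_i\le b_i$ for all $i$, implies $f(a)\le f(b)$), where a query of $v$ returns $f(v)$, find $x$ with $f(x)=x$. The deterministic query complexity is the minimum over deterministic algorithms always finding a fixed point of the worst-case number of queries. The randomized query complexity is the minimum, over randomized algorithms that on every input output a fixed point with probability at least $9/10$, of the worst-case expected number of queries (expectation over the algorithm's coins). *)

(* Defs.v *)
From HB Require Import structures.
From mathcomp Require Import all_boot all_order all_algebra.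
From Stdlib Require Import Rdefinitions.
From mathcomp Require Import Rstruct.
Notation R := Rdefinitions.R.
Set Implicit Arguments. Unset Strict Implicit. Unset Printing Implicit Defensive.
Import Order.TTheory GRing.Theory Num.Theory.
Local Open Scope ring_scope.

Definition point (k : nat) := {ffun 'I_k -> bool}.

Definition le_pt (k : nat) (a b : point k) : bool := [forall i, a i ==> b i].

Definition monotone_map (k : nat) (f : point k -> point k) : Prop :=
  forall a b : point k, le_pt a b -> le_pt (f a) (f b).

Definition is_fixed_point (k : nat) (f : point k -> point k) (x : point k) : bool :=
  f x == x.

(* Deterministic query algorithms = (adaptive) decision trees: an inner node
   queries v and continues according to the answer f(v); a leaf outputs a point. *)
Inductive dtree (k : nat) : Type :=
  | Leaf of point k
  | Node of point k & (point k -> dtree k).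

Fixpoint run (k : nat) (t : dtree k) (f : point k -> point k) : point k :=
  match t with
  | Leaf x => x
  | Node v ch => run (ch (f v)) f
  end.

Fixpoint nqueries (k : nat) (t : dtree k) (f : point k -> point k) : nat :=
  match t with
  | Leaf _ => 0%N
  | Node v ch => (nqueries (ch (f v)) f).+1
  end.

Definition det_solves (k : nat) (t : dtree k) : Prop :=
  forall f, monotone_map f -> is_fixed_point f (run t f).

(* Randomized algorithms: probability distributions over deterministic trees
   (finite support; weights are real numbers). *)
Notation rand_alg k := (seq (R * dtree k)%type).

Definition is_distribution (k : nat) (A : rand_alg k) : Prop :=
  all (fun p => 0 <= p.1) A /\ \sum_(p <- A) p.1 = 1.

Definition success_prob (k : nat) (A : rand_alg k) (f : point k -> point k) : R :=
  \sum_(p <- A) p.1 * (is_fixed_point f (run p.2 f))%:R.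

Definition expected_queries (k : nat) (A : rand_alg k) (f : point k -> point k) : R :=
  \sum_(p <- A) p.1 * (nqueries p.2 f)%:R.

Definition rand_solves (k : nat) (A : rand_alg k) : Prop :=
  is_distribution A /\
  forall f, monotone_map f -> 9 / 10 <= success_prob A f.

(* Main.v *)
Require Import Defs.
From HB Require Import structures.
From mathcomp Require Import all_boot all_order all_algebra.
From Stdlib Require Import Rdefinitions.
From mathcomp Require Import Rstruct.
From mathcomp Require Import zify ring lra.
Import Order.TTheory GRing.Theory Num.Theory.
Set Implicit Arguments. Unset Strict Implicit. Unset Printing Implicit Defensive.

Definition pre k (a b : point k) (n : nat) : bool :=
  [forall j : 'I_k, (j < n) ==> (a j == b j)].
Definition above k (v s : point k) (i : nat) : bool :=
  [exists j : 'I_k, [&& (j < i), pre v s j, v j & ~~ s j]].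
Definition fs k (s : point k) (v : point k) : point k :=
  [ffun i : 'I_k => above v s i || (pre v s i && s i)].

Lemma pre_lt k (a b : point k) n (j : 'I_k) : pre a b n -> j < n -> a j = b j.
Proof. by move=> /forallP /(_ j) /implyP H /H /eqP. Qed.

Lemma preP k (a b : point k) n :
  (forall j : 'I_k, j < n -> a j = b j) -> pre a b n.
Proof. by move=> H; apply/forallP => j; apply/implyP => /H ->. Qed.

Lemma pre_mono k (a b : point k) n n' : n <= n' -> pre a b n' -> pre a b n.
Proof. move=> Hn H; apply: preP => j Hj; apply: (pre_lt H); lia. Qed.

Lemma pre0 k (a b : point k) : pre a b 0.
Proof. by apply: preP. Qed.

Lemma pre_sym k (a b : point k) n : pre a b n = pre b a n.
Proof.
by apply/idP/idP => H; apply: preP => j Hj; rewrite (pre_lt H Hj).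
Qed.

Lemma pre_trans k (a b c : point k) n : pre a b n -> pre b c n -> pre a c n.
Proof.
by move=> H1 H2; apply: preP => j Hj; rewrite (pre_lt H1 Hj) (pre_lt H2 Hj).
Qed.

Lemma pre_first k (a b : point k) n : ~~ pre a b n ->
  exists j : 'I_k, [&& j < n, pre a b j & a j != b j].
Proof.
elim: n => [|n IH]; first by rewrite pre0.
case H: (pre a b n).
  move=> /forallPn [j]; rewrite negb_imply => /andP [Hj Hne].
  exists j; rewrite Hj Hne /=.
  case: (ltngtP j n) => Hjn.
  - by rewrite (pre_lt H Hjn) eqxx in Hne.
  - lia.
  - by rewrite Hjn H.
move=> _; have [j /and3P [Hj Hp Hne]] := IH (negbT H).
by exists j; rewrite Hp Hne ltnS ltnW.
Qed.

Lemma preSo k (a b : point k) (j : 'I_k) : pre a b j.+1 = pre a b j && (a j == b j).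
Proof.
apply/idP/andP.
  move=> H; split; first exact: pre_mono H.
  by rewrite (pre_lt H (ltnSn j)).
move=> [H /eqP E]; apply: preP => i Hi.
case: (ltngtP i j) => Hij; [exact: pre_lt H Hij | lia | by rewrite (val_inj Hij)].
Qed.

Lemma pre_full k (a b : point k) : pre a b k = (a == b).
Proof.
apply/idP/eqP => [H|->]; last by apply: preP.
by apply/ffunP => j; apply: (pre_lt H).
Qed.

Definition le_ptP k (a b : point k) : le_pt a b -> forall i, a i -> b i.
Proof. by move=> /forallP H i; apply/implyP. Qed.

Lemma fs_mono k (s : point k) : monotone_map (fs s).
Proof.
move=> v w Hvw; apply/forallP => i; apply/implyP; rewrite !ffunE.
have key : forall n, ~~ pre w s n -> pre v s n -> above w s i || (pre w s i && s i) -> True.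
  by [].
have aux : forall n, n <= i -> pre v s n -> ~~ pre w s n -> above w s i.
  move=> n Hn Hv Hw; have [j /and3P [Hj Hp Hne]] := pre_first Hw.
  have Evs := pre_lt Hv Hj.
  apply/existsP; exists j; rewrite Hp.
  have Hj' : j < i by lia.
  rewrite Hj' /=.
  case Ewj: (w j); case Evj: (v j); case Esj: (s j) => //;
    rewrite ?Ewj ?Esj ?Evj /= in Hne Evs *; try done.
  by have := le_ptP Hvw Evj; rewrite Ewj.
case/orP.
  move=> /existsP [j /and4P [Hj Hp Hv Hs]].
  case Hw: (pre w s j).
    apply/orP; left; apply/existsP; exists j; rewrite Hj Hw Hs andbT /=.
    exact: le_ptP Hvw _ Hv.
  by rewrite (aux j) // ?Hw // ltnW.
move=> /andP [Hp Hs].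
case Hw: (pre w s i); first by rewrite Hs orbT.
by rewrite (aux i) // Hw.
Qed.

Lemma fs_fixed k (s x : point k) : is_fixed_point (fs s) x -> x = s.
Proof.
move=> /eqP Hx; apply/eqP; rewrite -pre_full.
have: forall n, pre x s n.
  elim=> [|n IH]; first exact: pre0.
  apply: preP => j Hj.
  case: (ltngtP j n) => Hjn; [exact: pre_lt IH Hjn | lia |].
  rewrite -Hx ffunE.
  have -> : above x s j = false.
    apply/negbTE/existsPn => j'; apply/negP => /and4P [Hj' _ Hx' Hs'].
    have := pre_lt IH (leq_trans Hj' (eq_leq Hjn)).
    by move: Hx' Hs'; case: (x j'); case: (s j').
  by rewrite Hjn IH.
by apply.
Qed.

Lemma ans_eq k (s s' v : point k) (j : 'I_k) :
  pre s v j -> s j != v j -> pre s s' j.+1 -> fs s v = fs s' v.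
Proof.
move=> Hsv Hne Hss'.
have Hbnd : forall n, pre v s n -> n <= j.
  move=> n H; rewrite leqNgt; apply/negP => Hjn.
  by rewrite (pre_lt H Hjn) eqxx in Hne.
have Es : forall i : 'I_k, i <= j -> s i = s' i.
  by move=> i Hi; apply: (pre_lt Hss').
have A : forall n, pre v s n = pre v s' n.
  move=> n; case: (leqP n j) => Hn.
    apply/idP/idP => H; apply: preP => i Hi; rewrite (pre_lt H Hi) ?Es //; lia.
  apply/idP/idP => H.
    by have := Hbnd _ H; lia.
  by have := pre_lt H Hn; rewrite -Es // => E; rewrite E eqxx in Hne.
apply/ffunP => i; rewrite !ffunE A.
have -> : above v s i = above v s' i.
  apply: eq_existsb => j'; rewrite A.
  case Hp: (pre v s' j'); last by rewrite !andbF.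
  by rewrite Es //; apply: Hbnd; rewrite A.
case Hp: (pre v s' i) => //=.
by rewrite Es //; apply: Hbnd; rewrite A.
Qed.

Definition flip k (p : point k) (m : 'I_k) : point k :=
  [ffun i => if i == m then ~~ p m else p i].

Lemma split_sum k (p : point k) (m : 'I_k) (F : point k -> nat) :
  \sum_(s | pre s p m) F s =
  \sum_(s | pre s p m.+1) F s + \sum_(s | pre s (flip p m) m.+1) F s.
Proof.
rewrite (bigID (fun s : point k => s m == p m)) /=; congr (_ + _); apply: eq_bigl => s.
  by rewrite preSo.
rewrite preSo ffunE eqxx.
have -> : pre s (flip p m) m = pre s p m.
  apply/idP/idP => H; apply: preP => i Hi; rewrite (pre_lt H Hi) ffunE //;
    by have /negbTE -> : i != m by apply/eqP => E; rewrite E ltnn in Hi.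
by case: (s m); case: (p m).
Qed.

Lemma card_pre k (p : point k) m c : m <= k ->
  \sum_(s | pre s p m) c = c * expn 2 (k - m).
Proof.
move Ed : (k - m) => d; elim: d m p Ed => [|d IH] m p Ed Hm.
  have -> : m = k by lia.
  rewrite (eq_bigl (fun s => s == p)); last by move=> s; rewrite pre_full.
  by rewrite big_pred1_eq muln1.
have Hmk : m < k by lia.
rewrite (split_sum p (Ordinal Hmk) (fun _ => c)) /= !IH //; try lia.
by rewrite expnS; lia.
Qed.

Definition fail k (t : dtree k) (s : point k) : nat :=
  ~~ is_fixed_point (fs s) (run t (fs s)).

Lemma leaf_bound k (x : point k) (P : pred (point k)) w :
  \sum_(s | P s) w <= \sum_(s | P s) w * (s != x) + w.
Proof.
rewrite (bigID (fun s : point k => s == x)) /= [X in X <= _]addnC.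
apply: leq_add.
  by rewrite big_mkcondr; apply: leq_sum => s _; case: (s != x); rewrite ?muln1 ?muln0.
case Px: (P x).
  rewrite (eq_bigl (fun s => s == x)) ?big_pred1_eq //.
  by move=> s; case: eqP => [->|]; rewrite ?Px ?andbF.
rewrite big_pred0 //.
by move=> s; case: eqP => [->|]; rewrite ?Px ?andbF.
Qed.

Lemma main k (T : dtree k) : forall m p w, m <= k -> (k - m).+1 <= w ->
  (k - m) * expn 2 (k - m) <=
  \sum_(s | pre s p m) (2 * nqueries T (fs s) + w * fail T s).
Proof.
elim: T => [x | v ch IH] m p w Hm Hw.
  have H1 : \sum_(s | pre s p m) w * (s != x) <=
            \sum_(s | pre s p m) (2 * nqueries (Leaf x) (fs s) + w * fail (Leaf x) s).
    apply: leq_sum => s _; rewrite /= /fail /=.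
    case Ef: (is_fixed_point (fs s) x) => /=.
      by rewrite (fs_fixed Ef) eqxx muln0.
    by case: (s != x); rewrite /= ?muln1 ?muln0 ?add0n ?leqnn.
  have H2 := leaf_bound x (fun s => pre s p m) w.
  rewrite card_pre // in H2.
  have H3 := ltn_expl (k - m) (ltnSn 1).
  move: H1 H2 H3 Hw.
  set X := expn 2 (k - m); set S1 := \sum_(s | _) _; set S2 := \sum_(s | _) _.
  move=> H1 H2 H3 Hw; nia.
case Hvp: (pre v p m).
  (* informative query *)
  have Hpv : forall s, pre s p m = pre s v m.
    move=> s; apply/idP/idP => H; apply: (pre_trans H); by rewrite // pre_sym.
  rewrite (eq_bigl _ _ Hpv).
  suff inner : forall d m', m <= m' -> m' + d = k ->
    d * expn 2 d <= \sum_(s | pre s v m')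
       (2 * nqueries (Node v ch) (fs s) + w * fail (Node v ch) s).
    by apply: inner; lia.
  elim=> [|d IHd] m' Hmm' Hd; first by rewrite mul0n.
  have Hmk : m' < k by lia.
  rewrite (split_sum v (Ordinal Hmk)) /=.
  set q := flip v (Ordinal Hmk).
  have Hq : pre q v m'.
    by apply: preP => i Hi; rewrite ffunE; have /negbTE -> : i != Ordinal Hmk
      by apply/eqP => E; rewrite E /= ltnn in Hi.
  have Eans : forall s, pre s q m'.+1 -> fs s v = fs q v.
    move=> s Hs; apply: (@ans_eq _ _ _ _ (Ordinal Hmk)) => //=.
    - by apply: pre_trans Hq; apply: pre_mono Hs.
    - by rewrite (@pre_lt _ _ _ _ (Ordinal Hmk) Hs (ltnSn m')) ffunE eqxx; case: (v _).
  have E2 : \sum_(s | pre s q m'.+1)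
       (2 * nqueries (Node v ch) (fs s) + w * fail (Node v ch) s) =
     \sum_(s | pre s q m'.+1) 2 +
     \sum_(s | pre s q m'.+1)
       (2 * nqueries (ch (fs q v)) (fs s) + w * fail (ch (fs q v)) s).
    rewrite -big_split /=; apply: eq_bigr => s Hs.
    by rewrite /fail /= (Eans s Hs) mulnS addnA.
  rewrite E2 card_pre; last by lia.
  have := IHd m'.+1 ltac:(lia) ltac:(lia).
  have := IH (fs q v) m'.+1 q w ltac:(lia) ltac:(lia).
  have -> : k - m'.+1 = d by lia.
  rewrite expnS.
  set A := \sum_(s | _) _; set B := \sum_(s | _) _.
  move=> h1 h2; nia.
(* uninformative query *)
have [j /and3P [Hj Hpj Hne]] := pre_first (negbT Hvp).
rewrite (@leq_trans (\sum_(s | pre s p m)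
   (2 * nqueries (ch (fs p v)) (fs s) + w * fail (ch (fs p v)) s))) //.
  exact: IH.
apply: leq_sum => s Hs; rewrite /fail /=.
have -> : fs s v = fs p v.
  apply: (@ans_eq _ _ _ _ j).
  - by apply: (pre_trans (pre_mono (ltnW Hj) Hs)); rewrite pre_sym.
  - by rewrite (pre_lt Hs Hj) eq_sym.
  - exact: pre_mono Hs.
lia.
Qed.

Fixpoint chain k (n : nat) (x : point k) : dtree k :=
  match n with
  | 0 => Leaf x
  | n'.+1 => Node x (fun y => if y == x then Leaf x else chain n' y)
  end.

Definition wt k (x : point k) := #|[set i | x i]|.

Lemma wt_lt k (x y : point k) : le_pt x y -> x != y -> wt x < wt y.
Proof.
move=> Hle Hne; apply: proper_card; rewrite properEneq; apply/andP; split.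
  apply: contra Hne => /eqP E; apply/eqP/ffunP => i.
  have := congr1 (fun A : {set 'I_k} => i \in A) E; rewrite /= !inE => ->; done.
by apply/subsetP => i; rewrite !inE; apply: le_ptP.
Qed.

Lemma wt_full k (x y : point k) : k <= wt x -> le_pt x y -> y = x.
Proof.
move=> Hw Hle.
have Hs : [set i | x i] == setT.
  by rewrite eqEcard subsetT cardsT card_ord.
apply/ffunP => i.
have : i \in [set i | x i] by rewrite (eqP Hs) inE.
rewrite inE => Hx; rewrite Hx; exact: le_ptP Hle _ Hx.
Qed.

Lemma chain_ok k (f : point k -> point k) : monotone_map f ->
  forall n x, le_pt x (f x) -> k <= n + wt x ->
  is_fixed_point f (run (chain n x) f) /\ (nqueries (chain n x) f <= n)%N.
Proof.
move=> Hf; elim=> [|n IH] x Hx Hn /=.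
  by split => //; apply/eqP; apply: wt_full Hx.
case: eqP => [E|/eqP E] /=; first by split => //; apply/eqP.
have Hne : x != f x by rewrite eq_sym.
have [H1 H2] := IH (f x) (Hf _ _ Hx) ltac:(have := wt_lt Hx Hne; lia).
by split.
Qed.

Definition bot k : point k := [ffun => false].

Lemma tree_bound k (t : dtree k) :
  k * expn 2 k <= \sum_(s : point k) (2 * nqueries t (fs s) + k.+1 * fail t s).
Proof.
have := main t (bot k) (leq0n k) (leqnn (k - 0).+1).
rewrite subn0 => H; apply: (leq_trans H); apply: eq_leq; apply: eq_bigl => s; by rewrite pre0.
Qed.


Local Open Scope ring_scope.

Lemma wsum_le (T : Type) (A : seq (R * T)) (F G : T -> R) :
  all (fun p => 0 <= p.1) A -> (forall p, F p <= G p) ->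
  \sum_(p <- A) p.1 * F p.2 <= \sum_(p <- A) p.1 * G p.2.
Proof.
move=> HA HFG; elim: A HA => [|a A IH] /=; first by rewrite !big_nil.
rewrite !big_cons => /andP [Ha HA]; apply: lerD; last exact: IH.
exact: ler_wpM2l.
Qed.

Lemma sum_const_k k : \sum_(s : point k) (k%:R : R) = (k * expn 2 k)%N%:R.
Proof.
rewrite -natr_sum; congr (_%:R).
by rewrite (eq_bigl (fun s => pre s (bot k) 0)) ?card_pre ?subn0 // => s; rewrite pre0.
Qed.

Lemma rand_lower k (A : rand_alg k) : rand_solves A ->
  exists f, monotone_map f /\ 1/4 * k%:R <= expected_queries A f.
Proof.
case=> [[Hpos H1] Hs].
case: (boolP [exists s : point k, 1/4 * k%:R <= expected_queries A (fs s)]).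
  move/existsP => [s Hs']; exists (fs s); split => //; exact: fs_mono.
move=> /existsPn Hall; exfalso.
have Hlt : forall s, expected_queries A (fs s) < 1/4 * k%:R.
  by move=> s; rewrite ltNge Hall.
have Epos : forall s, 0 <= expected_queries A (fs s).
  move=> s; rewrite /expected_queries.
  have H := @wsum_le _ A (fun _ => 0) (fun t => (nqueries t (fs s))%:R) Hpos (fun t => ler0n _ _).
  by rewrite big1 /= in H => // p _; rewrite mulr0.
case: k A Hpos H1 Hs Hall Hlt Epos => [|k] A Hpos H1 Hs Hall Hlt Epos.
  by have := Hlt (bot 0); have := Epos (bot 0); rewrite mulr0; lra.
set K := k.+1.
have per_s : forall s, \sum_(p <- A) p.1 * (2 * nqueries p.2 (fs s) + K.+1 * fail p.2 s)%N%:R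
   = 2 * expected_queries A (fs s) + K.+1%:R * (\sum_(p <- A) p.1 - success_prob A (fs s)).
  move=> s; rewrite /expected_queries /success_prob -sumrB !mulr_sumr -big_split.
  apply: eq_bigr => p _ /=; rewrite /fail natrD !natrM.
  by case: (is_fixed_point _ _) => /=; ring.
have key : (K * expn 2 K)%N%:R <= \sum_(s : point K)
    (2 * expected_queries A (fs s) + K.+1%:R * (1 - success_prob A (fs s))).
  have E1 : (K * expn 2 K)%N%:R = \sum_(p <- A) p.1 * (K * expn 2 K)%N%:R :> R.
    by rewrite -mulr_suml H1 mul1r.
  have E2 : \sum_(p <- A) p.1 *
      (\sum_(s : point K) (2 * nqueries p.2 (fs s) + K.+1 * fail p.2 s))%N%:R =
      \sum_(s : point K)
      (2 * expected_queries A (fs s) + K.+1%:R * (1 - success_prob A (fs s))).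
    rewrite (eq_bigr (fun p => \sum_(s : point K)
         p.1 * (2 * nqueries p.2 (fs s) + K.+1 * fail p.2 s)%N%:R)); last first.
      by move=> p _; rewrite natr_sum mulr_sumr.
    by rewrite exchange_big; apply: eq_bigr => s _; rewrite per_s H1.
  rewrite E1 -E2.
  apply: (@wsum_le _ A (fun t => (K * expn 2 K)%N%:R)
     (fun t => (\sum_(s : point K) (2 * nqueries t (fs s) + K.+1 * fail t s))%N%:R) Hpos).
  by move=> t; rewrite ler_nat; exact: tree_bound.
have Hs' : forall s : point K,
    2 * expected_queries A (fs s) + K.+1%:R * (1 - success_prob A (fs s)) < K%:R.
  move=> s; have h1 := Hlt s; have h2 := Hs (fs s) (@fs_mono _ s).
  have hK : 1 <= K%:R :> R by rewrite ler1n.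
  have h3 : K.+1%:R * (1 - success_prob A (fs s)) <= K.+1%:R * (1/10) :> R.
    by apply: ler_wpM2l; [exact: ler0n | lra].
  have eK : K.+1%:R = K%:R + 1 :> R by rewrite -addn1 natrD.
  move: h1; rewrite -/K => h1.
  lra.
have strict := @ltr_sum _ _ (index_enum (point K)) predT _ _ _ (fun s _ => Hs' s).
rewrite sum_const_k in strict.
have : has predT (index_enum (point K)).
  by apply/hasP; exists (bot K); rewrite ?mem_index_enum.
move=> /strict; lra.
Qed.

Lemma upper k : exists t : dtree k, det_solves t /\
   forall f, monotone_map f -> (nqueries t f)%:R <= 1 * k%:R :> R.
Proof.
have Hb : forall y : point k, le_pt (bot k) y.
  by move=> y; apply/forallP => i; rewrite ffunE.
exists (chain k (bot k)); split.
  by move=> f Hf; have [] := chain_ok Hf (Hb (f (bot k))) (leq_addr _ _).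
move=> f Hf; have [_ H] := chain_ok Hf (Hb (f (bot k))) (leq_addr _ _).
by rewrite mul1r ler_nat.
Qed.

Lemma single_solves k (t : dtree k) : det_solves t -> rand_solves [:: (1, t)].
Proof.
move=> Ht; split.
  by split; rewrite /= ?ler01 // big_cons big_nil addr0.
by move=> f Hf; rewrite /success_prob big_cons big_nil addr0 mul1r (Ht f Hf) /=; lra.
Qed.

Lemma single_exp k (t : dtree k) f :
  expected_queries [:: (1, t)] f = (nqueries t f)%:R.
Proof. by rewrite /expected_queries big_cons big_nil addr0 mul1r. Qed.

Theorem corollary2 :
  exists c1 c2 : R, 0 < c1 /\ c1 <= c2 /\
  forall k : nat,
    (* deterministic query complexity <= c2 k *)
    (exists t : dtree k, det_solves t /\
       forall f, monotone_map f -> (nqueries t f)%:R <= c2 * k%:R) /\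
    (* deterministic query complexity >= c1 k *)
    (forall t : dtree k, det_solves t ->
       exists f, monotone_map f /\ c1 * k%:R <= (nqueries t f)%:R) /\
    (* randomized query complexity <= c2 k *)
    (exists A : rand_alg k, rand_solves A /\
       forall f, monotone_map f -> expected_queries A f <= c2 * k%:R) /\
    (* randomized query complexity >= c1 k *)
    (forall A : rand_alg k, rand_solves A ->
       exists f, monotone_map f /\ c1 * k%:R <= expected_queries A f).
Proof.
exists (1/4), 1; split; first lra; split; first lra.
move=> k; split; first exact: upper.
split.
  move=> t Ht; have [f [Hf H]] := rand_lower (single_solves Ht).
  by exists f; split => //; rewrite -single_exp.
split; last exact: rand_lower.
have [t [Ht H]] := upper k.
exists [:: (1, t)]; split; first exact: single_solves.
by move=> f Hf; rewrite single_exp; apply: H.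
Qed.
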